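(* Let $\mathcal{X}$ be a finite set of locations with metric $d$, let $\pi$ be a prior distribution on $\mathcal{X}$ with $\pi(x)>0$ for all $x\in\mathcal{X}$, let $\{\Phi_k\}$ be a partition of $\mathcal{X}$ into nonempty disjoint sets, let $\epsilon_k\ge 0$ for each $k$, and let $E_m\ge 0$. Let $f(\cdot\mid\cdot)$ be an obfuscation mechanism that satisfies $\epsilon_k$-differential privacy on each $\Phi_k$, i.e. $f(x'\mid x)\le e^{\epsilon_k} f(x'\mid y)$ for all $x,y\in\Phi_k$ and all $x'\in\mathcal{X}$. Suppose that for every $k$, $$E'(\Phi_k)\ \ge\ e^{\epsilon_k}E_m .$$ Then for every pseudo-location $x'\in\mathcal{X}$ with $\Pr(x')>0$, the conditional expected inference error of the optimal inference attack satisfies $ExpEr(x')\ge E_m$.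
   Context: An obfuscation mechanism is a family of probability distributions $f(\cdot\mid x)$ on $\mathcal{X}$, one for each true location $x\in\mathcal{X}$; $f(x'\mid x)$ is the probability of reporting pseudo-location $x'$ when the true location is $x$. The adversary knows $\pi$ and $f$. Define $\Pr(x')=\sum_{x\in\mathcal{X}}\pi(x)f(x'\mid x)$ and, when $\Pr(x')>0$, the posterior $\Pr(x\mid x')=\pi(x)f(x'\mid x)/\Pr(x')$. The conditional expected inference error (of the optimal inference attack) is $$ExpEr(x')=\min_{\hat{x}\in\mathcal{X}}\sum_{x\in\mathcal{X}}\Pr(x\mid x')\,d(\hat{x},x).$$ For a nonempty $\Phi\subseteq\mathcal{X}$, define $$E'(\Phi)=\min_{\hat{x}\in\mathcal{X}}\sum_{x\in\Phi}\frac{\pi(x)}{\sum_{y\in\Phi}\pi(y)}\,d(\hat{x},x)$$ (note the minimum ranges over all of $\mathcal{X}$, not just $\Phi$). *)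

(* Defs.v *)
From HB Require Import structures.
From mathcomp Require Import all_boot all_order all_algebra.
From mathcomp Require Import reals sequences exp.
Set Implicit Arguments. Unset Strict Implicit. Unset Printing Implicit Defensive.
Import Order.TTheory GRing.Theory Num.Theory.
Local Open Scope ring_scope.

(* Minimum of g over the (nonempty, witnessed by x0) finite type X.
   The value does not depend on the witness x0. *)
Definition minX (R : realType) (X : finType) (x0 : X) (g : X -> R) : R :=
  g (Order.arg_min x0 xpredT g).

Definition is_metric (R : realType) (X : finType) (d : X -> X -> R) : Prop :=
  (forall x y, 0 <= d x y) /\ (forall x y, d x y = 0 <-> x = y) /\
  (forall x y, d x y = d y x) /\ (forall x y z, d x z <= d x y + d y z).

Definition is_distr (R : realType) (X : finType) (pi : X -> R) : Prop :=
  (forall x, 0 <= pi x) /\ \sum_(x : X) pi x = 1.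

(* f x' x = f(x' | x): for each x, f(. | x) is a distribution *)
Definition is_mechanism (R : realType) (X : finType) (f : X -> X -> R) : Prop :=
  forall x, is_distr (fun x' => f x' x).

Definition Prx (R : realType) (X : finType) (pi : X -> R) (f : X -> X -> R) (x' : X) : R :=
  \sum_(x : X) pi x * f x' x.

Definition posterior (R : realType) (X : finType) (pi : X -> R) (f : X -> X -> R) (x' x : X) : R :=
  pi x * f x' x / Prx pi f x'.

Definition ExpEr (R : realType) (X : finType) (d : X -> X -> R) (pi : X -> R)
  (f : X -> X -> R) (x' : X) : R :=
  minX x' (fun xh => \sum_(x : X) posterior pi f x' x * d xh x).

(* E'(Phi), minimum over all of X; x0 is any element of X *)
Definition Eprime (R : realType) (X : finType) (d : X -> X -> R) (pi : X -> R)
  (x0 : X) (Phi : {set X}) : R :=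
  minX x0 (fun xh => \sum_(x in Phi) (pi x / \sum_(y in Phi) pi y) * d xh x).

(* Main.v *)
Require Import Defs.
From HB Require Import structures.
From mathcomp Require Import all_boot all_order all_algebra.
From mathcomp Require Import reals sequences exp.
From mathcomp Require Import ring.
Import Order.TTheory GRing.Theory Num.Theory.
Local Open Scope ring_scope.

Lemma minX_le (R : realType) (X : finType) (x0 : X) (g : X -> R) y :
  minX x0 g <= g y.
Proof.
rewrite /minX; case: (@arg_minP _ _ _ x0 xpredT g erefl) => i _ H.
exact: H.
Qed.

Lemma block (R : realType) (X : finType) (d : X -> X -> R) (pi : X -> R)
  (Phi : {set X}) (e Em : R) (f : X -> X -> R) x' xh :
  (forall x, 0 < pi x) -> (forall x, 0 <= d xh x) ->
  (forall x x', 0 <= f x' x) -> 0 <= Em ->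
  (exists y, y \in Phi) ->
  (forall x y, x \in Phi -> y \in Phi -> f x' x <= expR e * f x' y) ->
  expR e * Em <= Eprime d pi x' Phi ->
  Em * \sum_(y in Phi) pi y * f x' y <= \sum_(x in Phi) pi x * f x' x * d xh x.
Proof.
move=> pi0 d0 f0 Em0 [y0 y0P] fdp Ep.
set Pi := \sum_(y in Phi) pi y.
have Pi0 : 0 < Pi.
  rewrite /Pi (bigD1 y0) //=; apply: ltr_pwDl; first exact: pi0.
  by apply: sumr_ge0 => i _; apply/ltW.
set S := \sum_(x in Phi) pi x * f x' x * d xh x.
have hT : Pi * (expR e * Em) <= \sum_(x in Phi) pi x * d xh x.
  have H := le_trans Ep (minX_le _ _ x' _ xh).
  have -> : \sum_(x in Phi) pi x * d xh x =
     Pi * \sum_(x in Phi) pi x / Pi * d xh x.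
    rewrite mulr_sumr; apply: eq_bigr => i _.
    have Pn : Pi != 0 by rewrite gt_eqF.
    by field.
  by rewrite ler_pM2l.
have hy : forall y, y \in Phi -> f x' y * Pi * Em <= S.
  move=> y yP.
  have he : 0 < expR e := expR_gt0 e.
  rewrite -(ler_pM2l he).
  apply: (le_trans (y := f x' y * \sum_(x in Phi) pi x * d xh x)).
    rewrite (_ : expR e * (f x' y * Pi * Em) = f x' y * (Pi * (expR e * Em))); last by ring.
    by apply: ler_wpM2l.
  rewrite /S !mulr_sumr; apply: ler_sum => x xP.
  rewrite (_ : f x' y * (pi x * d xh x) = (pi x * d xh x) * f x' y); last by ring.
  rewrite (_ : expR e * (pi x * f x' x * d xh x) = (pi x * d xh x) * (expR e * f x' x)); last by ring.
  apply: ler_wpM2l; last exact: fdp y x yP xP.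
  by rewrite mulr_ge0 //; apply/ltW.
apply: (le_trans (y := \sum_(y in Phi) pi y * (S / Pi))).
  rewrite mulr_sumr; apply: ler_sum => y yP.
  rewrite (_ : Em * (pi y * f x' y) = pi y * (f x' y * Em)); last by ring.
  apply: ler_wpM2l; first by apply/ltW.
  by rewrite ler_pdivlMr // mulrAC; apply: hy.
by rewrite -mulr_suml mulrC divfK ?gt_eqF.
Qed.

Theorem theorem4 (R : realType) (X : finType) (d : X -> X -> R) (pi : X -> R)
  (P : {set {set X}}) (eps : {set X} -> R) (Em : R) (f : X -> X -> R) :
  is_metric d ->
  is_distr pi -> (forall x, 0 < pi x) ->
  partition P [set: X] ->
  (forall Phi, Phi \in P -> 0 <= eps Phi) ->
  0 <= Em ->
  is_mechanism f ->
  (forall Phi, Phi \in P -> forall x y x', x \in Phi -> y \in Phi ->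
     f x' x <= expR (eps Phi) * f x' y) ->
  (forall Phi x0, Phi \in P -> expR (eps Phi) * Em <= Eprime d pi x0 Phi) ->
  forall x', 0 < Prx pi f x' -> Em <= ExpEr d pi f x'.
Proof.
move=> [d0 _] _ pi0 /and3P[/eqP cov triv nz0] _ Em0 fm fdp Ep x' Pr0.
have f0 : forall x x', 0 <= f x' x by move=> x x''; case: (fm x) => H _.
rewrite /ExpEr /minX.
move: (Order.arg_min _ _ _) => xh.
have -> : \sum_x posterior pi f x' x * d xh x =
   (\sum_x pi x * f x' x * d xh x) / Prx pi f x'.
  by rewrite mulr_suml; apply: eq_bigr => i _; rewrite /posterior mulrAC.
rewrite ler_pdivlMr //.
have split F : \sum_x F x = \sum_(A in P) \sum_(x in A) F x :> R.
  by rewrite -(big_trivIset _ triv) cov; apply: eq_bigl => x; rewrite inE.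
rewrite /Prx !split mulr_sumr; apply: ler_sum => A AP.
apply: (block R X d pi A (eps A) Em f x' xh pi0 _ f0 Em0).
- by move=> x; apply: d0.
- case: (set_0Vmem A) => [A0|[y yA]]; last by exists y.
  by rewrite A0 in AP; rewrite AP in nz0.
- by move=> x y xA yA; exact: (fdp A AP x y x' xA yA).
- exact: (Ep A x' AP).
Qed.
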